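(* For every $p\in[1,\infty)$, the profile of the lamplighter group satisfies $\epsilon_{\mathbb Z\wr\mathbb Z;p}(S)\preceq \dfrac{\log S}{S^{1/3}}$.
   Context: The lamplighter group $\mathbb Z\wr\mathbb Z$ consists of pairs $(f,n)$ with $f\colon\mathbb Z\to\mathbb Z$ finitely supported and $n\in\mathbb Z$, with product $(f,n)(g,n')=(f+g(\cdot-n),n+n')$, equipped with the word metric for generators $(\delta_0,0)$ and $(0,1)$. For a metric space $X$, $\ell^p(X)$ and $\ell^p_1(X)$ are the $p$-summable functions and their unit sphere; for $\xi\colon X\to\ell^p(X)$, $S(\xi)=\sup\{d(x,y):\xi_x(y)\ne0\}$, $\varepsilon(\xi;p)=\sup_{x\ne y}\|\xi_x-\xi_y\|_p/d(x,y)$, and $\epsilon_{X;p}(S)=\inf\{\varepsilon(\xi;p):\xi\colon X\to\ell^p_1(X),\ S(\xi)\le S\}$. For non-negative monotone functions, $g\preceq f$ means there are constants $C,D>0$ with $f(t)\ge Cg(Dt)$ for all sufficiently large $t$. *)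

(* Defs.v *)
From HB Require Import structures.
From mathcomp Require Import all_boot all_order all_algebra.
From mathcomp Require Import all_classical all_reals all_analysis.
From mathcomp Require Import zify.
Set Implicit Arguments. Unset Strict Implicit. Unset Printing Implicit Defensive.
Import Order.TTheory GRing.Theory Num.Theory.
Local Open Scope classical_set_scope.
Local Open Scope ring_scope.

Section Profile.
Context {R : realType} {X : choiceType}.

Definition lp_norm (p : R) (u : X -> R) : \bar R :=
  ((\esum_(y in [set: X]) (`|u y| `^ p)%:E) `^ p^-1)%E.

Definition in_lp (p : R) (u : X -> R) : Prop :=
  (\esum_(y in [set: X]) (`|u y| `^ p)%:E < +oo)%E.

Definition in_lp1 (p : R) (u : X -> R) : Prop :=
  in_lp p u /\ lp_norm p u = 1%E.

Definition supp_radius (d : X -> X -> R) (xi : X -> X -> R) : \bar R :=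
  ereal_sup [set e | exists x y, xi x y <> 0 /\ e = (d x y)%:E].

Definition lip_const (d : X -> X -> R) (p : R) (xi : X -> X -> R) : \bar R :=
  ereal_sup [set e | exists x y, x <> y /\
     e = (lp_norm p (fun z => (xi x z - xi y z)%R) * ((d x y)^-1)%:E)%E].

Definition lp_profile (d : X -> X -> R) (p S : R) : \bar R :=
  ereal_inf [set lip_const d p xi | xi in
     [set xi : X -> X -> R | (forall x, in_lp1 p (xi x)) /\
                             (supp_radius d xi <= S%:E)%E]].
End Profile.

Definition fin_supp (f : int -> int) : Prop :=
  exists N : nat, forall k : int, (N < `|k|)%N -> f k = 0.

Record lamp := Lamp { lamp_f : int -> int; lamp_n : int;
                      lamp_fin : fin_supp lamp_f }.

HB.instance Definition _ := gen_eqMixin lamp.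
HB.instance Definition _ := gen_choiceMixin lamp.

Lemma fin_supp_mul (f g : int -> int) (n : int) :
  fin_supp f -> fin_supp g -> fin_supp (fun k => f k + g (k - n)).
Proof.
move=> [N1 H1] [N2 H2]; exists (N1 + N2 + `|n|)%N => k Hk.
rewrite H1 ?H2 ?addr0 //; lia.
Qed.

Lemma fin_supp_inv (f : int -> int) (n : int) :
  fin_supp f -> fin_supp (fun k => - f (k + n)).
Proof.
move=> [N H]; exists (N + `|n|)%N => k Hk.
rewrite H ?oppr0 //; lia.
Qed.

(* (f,n)(g,n') = (f + g(. - n), n + n') *)
Definition lmul (x y : lamp) : lamp :=
  Lamp (lamp_n x + lamp_n y) (fin_supp_mul (lamp_n x) (lamp_fin x) (lamp_fin y)).

(* (f,n)^-1 = (-f(. + n), -n) *)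
Definition linv (x : lamp) : lamp :=
  Lamp (- lamp_n x) (fin_supp_inv (lamp_n x) (lamp_fin x)).

Lemma fin_supp_delta0 : fin_supp (fun k : int => if k == 0 then 1 else 0).
Proof. by exists 0%N => k; case: (k =P 0) => [->|]. Qed.

Lemma fin_supp_0 : fin_supp (fun _ : int => 0).
Proof. by exists 0%N. Qed.

Definition gen_a : lamp := Lamp 0 fin_supp_delta0.
Definition gen_t : lamp := Lamp 1 fin_supp_0.

Definition lamp_gen (s : lamp) : Prop :=
  s = gen_a \/ s = gen_t \/ s = linv gen_a \/ s = linv gen_t.

Definition lamp_dist {R : realType} (x y : lamp) : R :=
  inf [set (size w)%:R | w in [set w : seq lamp |
         (forall s, List.In s w -> lamp_gen s) /\ foldl lmul x w = y]].

(* Main.v *)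
Require Import Defs.
From HB Require Import structures.
From mathcomp Require Import all_boot all_order all_algebra.
From mathcomp Require Import all_classical all_reals all_analysis.
From mathcomp Require Import zify ring lra.
Set Implicit Arguments. Unset Strict Implicit. Unset Printing Implicit Defensive.
Import Order.TTheory GRing.Theory Num.Theory.
Local Open Scope classical_set_scope.
Local Open Scope ring_scope.


Lemma lamp_ext (x y : lamp) : lamp_f x =1 lamp_f y -> lamp_n x = lamp_n y -> x = y.
Proof.
case: x => f n fs; case: y => g m gs /= /funext efg enm.
subst g m; congr Lamp; exact: Prop_irrelevance.
Qed.

Definition lone : lamp := Lamp 0 fin_supp_0.

Lemma lmulA : associative lmul.
Proof.
move=> x y z; apply: lamp_ext => [k|] /=; last by rewrite addrA.
by rewrite addrA opprD addrA.
Qed.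

Lemma lmul1l x : lmul lone x = x.
Proof. by apply: lamp_ext => [k|] /=; rewrite ?add0r ?subr0. Qed.

Lemma lmul1r x : lmul x lone = x.
Proof. by apply: lamp_ext => [k|] /=; rewrite ?addr0. Qed.

Lemma lmulVl x : lmul (linv x) x = lone.
Proof. by apply: lamp_ext => [k|] /=; rewrite ?opprK ?addNr. Qed.

Lemma lmulVr x : lmul x (linv x) = lone.
Proof. by apply: lamp_ext => [k|] /=; rewrite ?subrK ?addrN. Qed.

Lemma linvK x : linv (linv x) = x.
Proof. by apply: lamp_ext => [k|] /=; rewrite ?opprK ?subrK. Qed.

Lemma lmulKV x y : lmul (linv x) (lmul x y) = y.
Proof. by rewrite lmulA lmulVl lmul1l. Qed.

Lemma lmulK x y : lmul x (lmul (linv x) y) = y.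
Proof. by rewrite lmulA lmulVr lmul1l. Qed.

Lemma foldl_lmul x w : foldl lmul x w = lmul x (foldl lmul lone w).
Proof.
elim: w x => [|s w IH] x /=; first by rewrite lmul1r.
by rewrite IH [in RHS]IH lmul1l lmulA.
Qed.

Definition apow (j : int) : seq lamp := nseq `|j|%N (if 0 <= j then gen_a else linv gen_a).
Definition tpow (j : int) : seq lamp := nseq `|j|%N (if 0 <= j then gen_t else linv gen_t).

Lemma foldl_nseq (x s : lamp) n :
  foldl lmul x (nseq n.+1 s) = foldl lmul (lmul x s) (nseq n s).
Proof. by []. Qed.

Lemma tpow_f x j : lamp_f (foldl lmul x (tpow j)) =1 lamp_f x.
Proof.
rewrite /tpow; case: ifP => _; elim: `|j|%N x => [|n IH] x k //=;
  rewrite IH /= ?oppr0 ?addr0 //.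
Qed.

Lemma tpow_n x j : lamp_n (foldl lmul x (tpow j)) = lamp_n x + j.
Proof.
rewrite /tpow; case: ifP => j0.
  have -> : j = (`|j|%N)%:Z by lia.
  rewrite absz_nat.
  by elim: `|j|%N x => [|n IH] x /=; rewrite ?addr0 // IH /=; lia.
have -> : j = - (`|j|%N)%:Z by lia.
rewrite abszN absz_nat.
by elim: `|j|%N x => [|n IH] x /=; rewrite ?subr0 // IH /=; lia.
Qed.

Lemma apow_n x j : lamp_n (foldl lmul x (apow j)) = lamp_n x.
Proof.
rewrite /apow; case: ifP => _; elim: `|j|%N x => [|n IH] x //=;
  rewrite IH /= ?oppr0 ?addr0 //.
Qed.

Lemma apow_f x j k : lamp_f (foldl lmul x (apow j)) k =
   lamp_f x k + (if k == lamp_n x then j else 0).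
Proof.
rewrite /apow; case: ifP => j0.
  have -> : j = (`|j|%N)%:Z by lia.
  rewrite absz_nat.
  elim: `|j|%N x => [|n IH] x /=; first by case: ifP; rewrite addr0.
  rewrite IH /= addr0 subr_eq0; case: ifP => _; lia.
have -> : j = - (`|j|%N)%:Z by lia.
rewrite abszN absz_nat.
elim: `|j|%N x => [|n IH] x /=; first by case: ifP; rewrite addr0.
rewrite IH /= addr0 subr0 subr_eq0.
by have [->|ne] := eqVneq k (lamp_n x); rewrite ?eqxx ?(negbTE ne) /=; lia.
Qed.

Fixpoint loopw (N : nat) (start : int) (g : int -> int) : seq lamp :=
  match N with
  | 0 => [::]
  | N'.+1 => apow (g start) ++ gen_t :: loopw N' (start + 1) g
  end.

Lemma loopw_spec N : forall start g x, lamp_n x = start ->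
  lamp_n (foldl lmul x (loopw N start g)) = start + N%:Z /\
  forall k, lamp_f (foldl lmul x (loopw N start g)) k =
    lamp_f x k + (if (start <= k) && (k < start + N%:Z) then g k else 0).
Proof.
elim: N => [|N IH] start g x xn /=.
  by split; [rewrite addr0 | move=> k; case: ifP; rewrite ?addr0 //; lia].
rewrite foldl_cat /=.
set y := lmul _ gen_t.
have yn : lamp_n y = start + 1 by rewrite /y /= apow_n xn.
have [IH1 IH2] := IH (start + 1) g y yn.
split; first by rewrite IH1; lia.
move=> k; rewrite IH2 /y /= addr0 apow_f xn -addrA; congr (_ + _).
case: eqP => [->|kn]; case: ifP; case: ifP; try lia; move=> *; rewrite ?addr0 ?add0r //.
Qed.

Lemma size_apow j : size (apow j) = `|j|%N.
Proof. by rewrite size_nseq. Qed.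
Lemma size_tpow j : size (tpow j) = `|j|%N.
Proof. by rewrite size_nseq. Qed.

Lemma size_loopw N : forall start g B, (forall k, (`|g k| <= B)%N) ->
  (size (loopw N start g) <= N * B.+1)%N.
Proof.
elim: N => [|N IH] start g B gB //=.
rewrite size_cat size_apow /= mulSn.
have := IH (start + 1) g B gB; have := gB start; lia.
Qed.

Lemma gen_apow j s : List.In s (apow j) -> lamp_gen s.
Proof.
rewrite /apow; elim: `|j|%N => [|n IH] //= [<-|/IH//].
by case: ifP => _; rewrite /lamp_gen; tauto.
Qed.

Lemma gen_tpow j s : List.In s (tpow j) -> lamp_gen s.
Proof.
rewrite /tpow; elim: `|j|%N => [|n IH] //= [<-|/IH//].
by case: ifP => _; rewrite /lamp_gen; tauto.
Qed.

Lemma gen_loopw N : forall start g s, List.In s (loopw N start g) -> lamp_gen s.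
Proof.
elim: N => [|N IH] start g s //=.
move=> /List.in_app_iff [/gen_apow//|/= [<-|/IH//]].
by rewrite /lamp_gen; tauto.
Qed.

Definition fullw (M : nat) (w : lamp) : seq lamp :=
  tpow (- M%:Z) ++ loopw (M.*2.+1) (- M%:Z) (lamp_f w) ++ tpow (lamp_n w - M%:Z - 1).

Lemma fullw_spec M w : (forall k, (M < `|k|)%N -> lamp_f w k = 0) ->
  foldl lmul lone (fullw M w) = w.
Proof.
move=> wsupp; rewrite /fullw 2!foldl_cat.
set x1 := foldl lmul lone (tpow _).
have x1n : lamp_n x1 = - M%:Z by rewrite /x1 tpow_n /= add0r.
have x1f : lamp_f x1 =1 fun=> 0 by move=> k; rewrite /x1 tpow_f.
have [L1 L2] := loopw_spec (M.*2.+1) (lamp_f w) x1n.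
apply: lamp_ext => [k|]; last by rewrite tpow_n L1; lia.
rewrite tpow_f L2 x1f add0r; case: ifP => // Hk.
by rewrite wsupp //; lia.
Qed.

Lemma gen_fullw M w s : List.In s (fullw M w) -> lamp_gen s.
Proof.
rewrite /fullw => /List.in_app_iff [/gen_tpow//|/List.in_app_iff [/gen_loopw//|/gen_tpow//]].
Qed.

Lemma size_fullw M w B : (forall k, (`|lamp_f w k| <= B)%N) -> (`|lamp_n w| <= M)%N ->
  (size (fullw M w) <= M + M.*2.+1 * B.+1 + M.*2.+1)%N.
Proof.
move=> gB nM; have := size_loopw (M.*2.+1) (- M%:Z) gB.
rewrite /fullw; set L := loopw _ _ _; rewrite 2!size_cat !size_tpow.
set a := size L; set b := (M.*2.+1 * B.+1)%N; lia.
Qed.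

Lemma dist_le_word {R : realType} x y (w : seq lamp) :
  (forall s, List.In s w -> lamp_gen s) -> foldl lmul x w = y ->
  @lamp_dist R x y <= (size w)%:R.
Proof.
move=> gw xy; apply: ge_inf; last by exists w.
by exists 0 => _ [v _ <-]; rewrite ler0n.
Qed.

Section EsumTools.
Local Open Scope ereal_scope.
Context {R : realType}.

Lemma esumZ (T : choiceType) (I : set T) (c : R) (a : T -> \bar R) :
  (0 <= c)%R -> (forall i, I i -> 0 <= a i) ->
  \esum_(i in I) (c%:E * a i) = c%:E * \esum_(i in I) a i.
Proof.
move=> c0 a0; rewrite /esum -ereal_supZl //; last first.
  by apply/set0P; exists 0; exists set0; [exact: fsets_set0|rewrite fsbig_set0].
have E X : fsets I X -> \sum_(x \in X) (c%:E * a x) = c%:E * \sum_(x \in X) a x.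
  move=> [finX XI]; rewrite !fsbig_finite //= big_seq [in RHS]big_seq.
  by rewrite ge0_sume_distrr // => i; rewrite in_fset_set // inE => /XI /a0.
congr ereal_sup; apply/seteqP; split => y.
  by move=> [X XI <-]; exists (\sum_(x \in X) a x); [exists X|rewrite E].
by move=> [z [X XI <-] <-]; exists X => //; rewrite E.
Qed.

Lemma esum_finType (B : finType) (F : B -> R) :
  (forall b, (0 <= F b)%R) ->
  \esum_(b in [set: B]) (F b)%:E = (\sum_(b : B) F b)%:E.
Proof.
move=> F0; rewrite esum_fset; [|exact: finite_finset|by move=> b _; rewrite lee_fin].
rewrite fsumEFin; last exact: finite_finset.
congr EFin.
rewrite (fsbigE (enum B)) ?enum_uniq //; last by move=> i _; rewrite mem_enum.
by rewrite big_enum_cond /=; apply: eq_bigl => b; rewrite in_setT.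
Qed.

Lemma esum_shift x (a : lamp -> \bar R) :
  \esum_(z in [set: lamp]) a z = \esum_(w in [set: lamp]) a (lmul x w).
Proof.
rewrite -(esum_image setT (lmul x) a); last by move=> u v _ _ /(congr1 (lmul (linv x))); rewrite !lmulKV.
congr esum; apply/seteqP; split => z _ //.
by exists (lmul (linv x) z) => //; rewrite lmulK.
Qed.

Lemma esum_range (B : finType) (enc : B -> lamp) (F : lamp -> R) :
  injective enc -> (forall w, F w <> 0%R -> exists b, enc b = w) ->
  (forall w, (0 <= F w)%R) ->
  \esum_(w in [set: lamp]) (F w)%:E = (\sum_(b : B) F (enc b))%:E.
Proof.
move=> encI Fsupp F0.
rewrite (esumID (range enc)); last by move=> w _; rewrite lee_fin.
rewrite [X in _ + X]esum1 ?adde0; last first.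
  move=> w [_ /= nw]; congr EFin; apply: contra_notP nw => /Fsupp [b <-].
  by exists b.
rewrite setTI esum_image; last by move=> u v _ _ /encI.
exact: esum_finType.
Qed.

End EsumTools.

Section Psi.
Context {R : realType} (L : nat).

Definition Tn (j : int) : nat := if (`|j| <= L)%N then L else (L.*2 - `|j|)%N.
Definition T (j : int) : R := (Tn j)%:R.

Lemma Tn_step j e : (`|e| = 1)%N ->
  (Tn j <= Tn (j + e) + 1)%N /\ (Tn (j + e) <= Tn j + 1)%N.
Proof. by move=> e1; rewrite /Tn; case: ifP; case: ifP; lia. Qed.

Lemma Tn_zero j : (L.*2 <= `|j|)%N -> (0 < L)%N -> Tn j = 0%N.
Proof. by move=> Hj L0; rewrite /Tn; case: ifP; lia. Qed.

Lemma T_ge0 j : 0 <= T j. Proof. exact: ler0n. Qed.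

Lemma T_step j e : (`|e| = 1)%N -> `|T j - T (j + e)| <= 1.
Proof.
move=> /(Tn_step j) [H1 H2]; rewrite /T ler_norml.
have H1' : (Tn j)%:R <= (Tn (j+e))%:R + 1 :> R by rewrite natr1 ler_nat -addn1.
have H2' : (Tn (j+e))%:R <= (Tn j)%:R + 1 :> R by rewrite natr1 ler_nat -addn1.
by apply/andP; split; lra.
Qed.

Definition nP := (4 * L)%N.+1.
Definition nV := (4 * L)%N.+3.
Definition zv (v : 'I_nV) : int := v%:Z - (L.*2.+1)%:Z.
Definition Bx := ('I_nV * {ffun 'I_nP -> 'I_nV})%type.

Definition encf (m : int) (h : 'I_nP -> int) (k : int) : int :=
  let j := k - m + (L.*2)%:Z in
  if (0 <= j) && (j < nP%:Z) then h (inord `|j|) else 0.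

Lemma encf_fin m h : fin_supp (encf m h).
Proof.
exists (`|m| + L.*2 + nP)%N => k Hk; rewrite /encf; case: ifP => //; rewrite /nP; lia.
Qed.

Definition enc (b : Bx) : lamp :=
  Lamp (zv b.1) (encf_fin (zv b.1) (fun i => zv (b.2 i))).

Definition suppc (w : lamp) : Prop :=
  forall k, lamp_f w k <> 0 -> (`|k - lamp_n w| <= L.*2)%N.

Definition psi0 (w : lamp) : R :=
  if `[< suppc w >] then
    T (lamp_n w) * \prod_(i < nP) T (lamp_f w (lamp_n w - (L.*2)%:Z + i%:Z))
  else 0.

Lemma psi0_ge0 w : 0 <= psi0 w.
Proof.
rewrite /psi0; case: ifP => // _; rewrite mulr_ge0 ?T_ge0 //.
by apply: prodr_ge0 => i _; exact: T_ge0.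
Qed.

Lemma psi0_encf w m h : lamp_n w = m -> lamp_f w =1 encf m h ->
  psi0 w = T m * \prod_(i < nP) T (h i).
Proof.
move=> wn wf; rewrite /psi0 asboolT; last first.
  move=> k; rewrite wf wn /encf; case: ifP => //; rewrite /nP; lia.
rewrite wn; congr (_ * _); apply: eq_bigr => i _; rewrite wf /encf.
have -> : m - (L.*2)%:Z + i%:Z - m + (L.*2)%:Z = i%:Z by lia.
rewrite absz_nat inord_val; case: ifP => //.
by have := ltn_ord i; lia.
Qed.

Lemma psi0_enc b : psi0 (enc b) = T (zv b.1) * \prod_(i < nP) T (zv (b.2 i)).
Proof. exact: psi0_encf. Qed.

Lemma psi0_tt s e b : lamp_n s = e -> lamp_f s =1 (fun=> 0) ->
  psi0 (lmul s (enc b)) = T (zv b.1 + e) * \prod_(i < nP) T (zv (b.2 i)).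
Proof.
move=> sn sf; apply: psi0_encf => [|k] /=; first by rewrite sn addrC.
rewrite sf add0r /encf sn.
by have -> : k - e - zv b.1 + (L.*2)%:Z = k - (zv b.1 + e) + (L.*2)%:Z by lia.
Qed.

Lemma psi0_aa s e b : (0 < L)%N -> lamp_n s = 0 -> (forall k, lamp_f s k = if k == 0 then e else 0) ->
  psi0 (lmul s (enc b)) = T (zv b.1) *
    \prod_(i < nP) T (zv (b.2 i) + (if i%:Z == (L.*2)%:Z - zv b.1 then e else 0)).
Proof.
move=> L0 sn sf.
have [mL|mL] := leqP `|zv b.1| L.*2; last first.
  rewrite /T Tn_zero //; last lia.
  rewrite mul0r /psi0 /= sn add0r; case: ifP => // _.
  by rewrite /T Tn_zero ?mul0r //; lia.
apply: psi0_encf => [|k] /=; first by rewrite sn add0r.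
rewrite sf sn subr0 /encf.
case Hk: (_ && _).
  rewrite inordK; last by move: Hk; rewrite /nP; lia.
  have -> : ((absz (k - zv b.1 + (L.*2)%:Z))%:Z == (L.*2)%:Z - zv b.1) = (k == 0).
    by move: Hk; rewrite /nP => Hk; apply/eqP/eqP; lia.
  by rewrite addrC.
case: eqP => [k0|]; rewrite ?addr0 //.
have H : (0 <= 0 - zv b.1 + (L.*2)%:Z) && (0 - zv b.1 + (L.*2)%:Z < ((4*L).+1)%:Z).
  by apply/andP; split; lia.
by move: Hk; rewrite k0 /nP H.
Qed.

End Psi.

Section Sums.
Context {R : realType} (L : nat) (p : R) (L0 : (0 < L)%N) (hp : 1 <= p).

Let p0 : 0 < p. Proof. exact: lt_le_trans hp. Qed.

Lemma powR_prod (I : Type) (r : seq I) (P : pred I) (F : I -> R) :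
  (forall i, 0 <= F i) ->
  (\prod_(i <- r | P i) F i) `^ p = \prod_(i <- r | P i) (F i `^ p).
Proof.
move=> F0; elim: r => [|i r IH]; first by rewrite !big_nil powR1.
rewrite !big_cons; case: ifP => // _.
by rewrite powRM ?IH // prodr_ge0.
Qed.

Lemma powR_le1 x : 0 <= x <= 1 -> x `^ p <= 1.
Proof.
move=> /andP[x0 x1]; have e1 : (1:R) `^ p = 1 by rewrite powR1.
rewrite -[X in _ <= X]e1.
by apply: ge0_ler_powR => //; [exact: ltW| rewrite nnegrE].
Qed.

Definition V := \sum_(v : 'I_(nV L)) T L (zv v) `^ p.

Lemma V_ge0 : 0 <= V.
Proof. by apply: sumr_ge0 => v _; exact: powR_ge0. Qed.

Lemma sum_prod_h (G : 'I_(nP L) -> 'I_(nV L) -> R) :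
  \sum_(h : {ffun 'I_(nP L) -> 'I_(nV L)}) \prod_i G i (h i) =
  \prod_i \sum_(v : 'I_(nV L)) G i v.
Proof. by rewrite bigA_distr_bigA. Qed.

Lemma sum_psi0 : \sum_(b : Bx L) psi0 L (enc b) `^ p = V * V ^+ nP L.
Proof.
have Tg := T_ge0 L.
under eq_bigr => b _ do rewrite psi0_enc powRM ?T_ge0 ?prodr_ge0 ?powR_prod //.
rewrite -(pair_bigA _ (fun (m : 'I_(nV L)) (h : {ffun 'I_(nP L) -> 'I_(nV L)}) => T L (zv m) `^ p * \prod_i T L (zv (h i)) `^ p)) /=.
under eq_bigr => m _ do rewrite -mulr_sumr (sum_prod_h (fun _ v => T L (zv v) `^ p)) prodr_const card_ord.
by rewrite -mulr_suml.
Qed.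

Lemma sumdT e : (`|e| = 1)%N ->
  \sum_(m : 'I_(nV L)) `|T L (zv m) - T L (zv m + e)| `^ p <= (nV L)%:R.
Proof.
move=> e1; apply: (@le_trans _ _ (\sum_(m : 'I_(nV L)) (1:R))); last first.
  by rewrite sumr_const card_ord.
apply: ler_sum => m _; apply: powR_le1; rewrite normr_ge0 /=.
exact: T_step.
Qed.

Lemma sum_t s e : (`|e| = 1)%N -> lamp_n s = e -> lamp_f s =1 (fun=> 0) ->
  \sum_(b : Bx L) `|psi0 L (enc b) - psi0 L (lmul s (enc b))| `^ p
    <= (nV L)%:R * V ^+ nP L.
Proof.
move=> e1 sn sf; have Tg : forall j, (0:R) <= T L j by move=> j; exact: T_ge0.
have Pg (h : {ffun 'I_(nP L) -> 'I_(nV L)}) : (0:R) <= \prod_i T L (zv (h i)).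
  by apply: prodr_ge0 => *; exact: Tg.
under eq_bigr => b _ do rewrite psi0_enc (psi0_tt _ sn sf) -mulrBl normrM
  (ger0_norm (Pg _)) powRM ?normr_ge0 ?Pg // powR_prod //.
rewrite -(pair_bigA _ (fun (m : 'I_(nV L)) (h : {ffun 'I_(nP L) -> 'I_(nV L)}) =>
  `|T L (zv m) - T L (zv m + e)| `^ p * \prod_i T L (zv (h i)) `^ p)) /=.
under eq_bigr => m _ do rewrite -mulr_sumr (sum_prod_h (fun _ v => T L (zv v) `^ p))
  prodr_const card_ord.
rewrite -mulr_suml; apply: ler_wpM2r; first by apply: exprn_ge0; exact: V_ge0.
exact: sumdT.
Qed.

Lemma inner_a (m : 'I_(nV L)) e : (`|e| = 1)%N -> (`|zv m| <= L.*2)%N ->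
  \sum_(h : {ffun 'I_(nP L) -> 'I_(nV L)})
    `|\prod_i T L (zv (h i)) -
      \prod_i T L (zv (h i) + (if i%:Z == (L.*2)%:Z - zv m then e else 0))| `^ p
  <= (nV L)%:R * V ^+ (4 * L).
Proof.
move=> e1 mL; have Tg : forall j, (0:R) <= T L j by move=> j; exact: T_ge0.
pose i0 : 'I_(nP L) := inord `|(L.*2)%:Z - zv m|.
have i0v : (i0 : nat)%:Z = (L.*2)%:Z - zv m.
  by rewrite /i0 inordK; rewrite /nP; lia.
pose G (i : 'I_(nP L)) (v : 'I_(nV L)) :=
  if i == i0 then `|T L (zv v) - T L (zv v + e)| `^ p else T L (zv v) `^ p.
have E (h : {ffun 'I_(nP L) -> 'I_(nV L)}) :
  `|\prod_i T L (zv (h i)) -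
    \prod_i T L (zv (h i) + (if i%:Z == (L.*2)%:Z - zv m then e else 0))| `^ p
  = \prod_i G i (h i).
  rewrite (bigD1 i0) //= [X in _ - X](bigD1 i0) //= i0v eqxx.
  have -> : \prod_(i < nP L | i != i0)
      T L (zv (h i) + (if i%:Z == (L.*2)%:Z - zv m then e else 0)) =
      \prod_(i < nP L | i != i0) T L (zv (h i)) :> R.
    apply: eq_bigr => i ii0; case: eqP => [iv|]; last by rewrite addr0.
    have ii : i = i0 by apply: val_inj => /=; lia.
    by rewrite ii eqxx in ii0.
  have Pg : (0:R) <= \prod_(i < nP L | i != i0) T L (zv (h i)) by apply: prodr_ge0.
  rewrite -mulrBl normrM (ger0_norm Pg) powRM ?normr_ge0 //.
  rewrite powR_prod // [RHS](bigD1 i0) //= /G eqxx; congr (_ * _).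
  by apply: eq_bigr => i ii0; rewrite (negbTE ii0).
under eq_bigr => h _ do rewrite E.
rewrite sum_prod_h (bigD1 i0) //=.
have -> : \prod_(i < nP L | i != i0) \sum_v G i v = V ^+ (4 * L).
  rewrite (eq_bigr (fun=> V)); last by move=> i ii0; apply: eq_bigr => v _; rewrite /G (negbTE ii0).
  rewrite prodr_const cardC1 card_ord //.
apply: ler_wpM2r; first by apply: exprn_ge0; exact: V_ge0.
under eq_bigr => v _ do rewrite /G eqxx.
exact: sumdT.
Qed.

Lemma sum_a s e : (`|e| = 1)%N -> lamp_n s = 0 ->
  (forall k, lamp_f s k = if k == 0 then e else 0) ->
  \sum_(b : Bx L) `|psi0 L (enc b) - psi0 L (lmul s (enc b))| `^ p
    <= (nV L)%:R * V ^+ nP L.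
Proof.
move=> e1 sn sf; have Tg : forall j, (0:R) <= T L j by move=> j; exact: T_ge0.
under eq_bigr => b _ do rewrite psi0_enc (psi0_aa _ L0 sn sf) -mulrBr normrM
  (ger0_norm (Tg _)) powRM ?normr_ge0 ?Tg //.
rewrite -(pair_bigA _ (fun (m : 'I_(nV L)) (h : {ffun 'I_(nP L) -> 'I_(nV L)}) =>
  T L (zv m) `^ p * `|\prod_i T L (zv (h i)) -
      \prod_i T L (zv (h i) + (if i%:Z == (L.*2)%:Z - zv m then e else 0))| `^ p)) /=.
under eq_bigr => m _ do rewrite -mulr_sumr.
apply: (@le_trans _ _ (\sum_(m : 'I_(nV L)) T L (zv m) `^ p * ((nV L)%:R * V ^+ (4 * L)))).
  apply: ler_sum => m _; have [mL|mL] := leqP `|zv m| L.*2.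
    by apply: ler_wpM2l; [exact: powR_ge0|exact: inner_a].
  by rewrite /T Tn_zero // ?powR0 ?mul0r ?gt_eqF //; lia.
by rewrite -mulr_suml -/V mulrCA -exprS.
Qed.

End Sums.

Section Norm.
Context {R : realType} (L : nat) (p : R) (L0 : (0 < L)%N) (hp : 1 <= p).

Let p0 : 0 < p. Proof. exact: lt_le_trans hp. Qed.

Lemma powR_inv (x : R) : 0 <= x -> (x^-1) `^ p = (x `^ p)^-1.
Proof.
rewrite le_eqVlt => /predU1P[<-|x0]; first by rewrite invr0 powR0 ?invr0 // gt_eqF.
by rewrite -powR_inv1 ?(ltW x0) // -powRrM mulN1r powRN.
Qed.

Lemma V_lb : (L.*2.+1)%:R * (L%:R `^ p) <= V L p.
Proof.
rewrite /V -(big_mkord xpredT (fun v => T L (v%:Z - (L.*2.+1)%:Z) `^ p)).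
rewrite (@big_cat_nat _ _ _ L.+1) //=; last by rewrite /nV; lia.
rewrite (@big_cat_nat _ _ _ (L.*2 + L).+2 L.+1) //=; last by rewrite /nV; lia.
have -> : \sum_(L.+1 <= i < (L.*2 + L).+2) T L (i%:Z - (L.*2.+1)%:Z) `^ p =
          \sum_(L.+1 <= i < (L.*2 + L).+2) (L%:R `^ p : R).
  apply: eq_big_nat => i /andP[i1 i2]; rewrite /T /Tn.
  by case: ifP => //; lia.
rewrite sumr_const_nat.
have -> : ((L.*2 + L).+2 - L.+1)%N = L.*2.+1 by lia.
rewrite -mulr_natl.
have A : 0 <= \sum_(0 <= i < L.+1) T L (i%:Z - (L.*2.+1)%:Z) `^ p.
  by apply: sumr_ge0 => *; exact: powR_ge0.
have B : 0 <= \sum_((L.*2 + L).+2 <= i < nV L) T L (i%:Z - (L.*2.+1)%:Z) `^ p.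
  by apply: sumr_ge0 => *; exact: powR_ge0.
lra.
all: rewrite ?/nV; lia.
Qed.

Lemma V_gt0 : 0 < V L p.
Proof.
apply: lt_le_trans (V_lb); apply: mulr_gt0; first by rewrite ltr0n.
by apply: powR_gt0; rewrite ltr0n.
Qed.

Definition Pt := V L p * V L p ^+ nP L.
Definition cN := Pt `^ (- p^-1).
Definition psi (w : lamp) : R := cN * psi0 L w.
Definition delta : R := 3 / L%:R.

Lemma Pt_gt0 : 0 < Pt.
Proof. by rewrite /Pt mulr_gt0 ?exprn_gt0 ?V_gt0. Qed.

Lemma cN_ge0 : 0 <= cN. Proof. exact: powR_ge0. Qed.

Lemma cN_p : cN `^ p = Pt^-1.
Proof.
rewrite /cN -powRrM mulNr mulVf ?gt_eqF // powR_inv1 //.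
exact: ltW Pt_gt0.
Qed.

Lemma psi_ge0 w : 0 <= psi w.
Proof. by rewrite /psi mulr_ge0 ?cN_ge0 ?psi0_ge0. Qed.

Lemma sum_psi : \sum_(b : Bx L) psi (enc b) `^ p = 1.
Proof.
under eq_bigr => b _ do rewrite /psi powRM ?cN_ge0 ?psi0_ge0 // cN_p.
by rewrite -mulr_sumr sum_psi0 // -/Pt mulVf // gt_eqF // Pt_gt0.
Qed.

Lemma ratio_le : (nV L)%:R / V L p <= delta `^ p.
Proof.
rewrite ler_pdivrMr ?V_gt0 //.
apply: le_trans (_ : delta `^ p * ((L.*2.+1)%:R * (L%:R `^ p)) <= _); last first.
  by apply: ler_wpM2l; [exact: powR_ge0|exact: V_lb].
rewrite /delta powRM ?ler0n ?invr_ge0 ?ler0n // powR_inv ?ler0n //.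
have Lp : 0 < L%:R `^ p :> R by apply: powR_gt0; rewrite ltr0n.
set y := L%:R `^ p; set x := 3 `^ p.
have -> : x / y * ((L.*2.+1)%:R * y) = x * (L.*2.+1)%:R.
  by field; rewrite gt_eqF.
have h3 : (3:R) <= x by rewrite /x; apply: le1r_powR => //; lra.
have : (nV L)%:R <= 3 * (L.*2.+1)%:R :> R.
  by rewrite -natrM ler_nat /nV; lia.
move=> /le_trans; apply; apply: ler_wpM2r => //; exact: ler0n.
Qed.

End Norm.

Section Boxes.
Context {R : realType} (L : nat) (L0 : (0 < L)%N).

Definition inbox (u : lamp) : Prop :=
  [/\ (`|lamp_n u| < L.*2)%N,
      (forall k, lamp_f u k <> 0 -> (`|k - lamp_n u| <= L.*2)%N) &
      (forall k, (`|k - lamp_n u| <= L.*2)%N -> (`|lamp_f u k| < L.*2)%N)].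

Definition outbox (u : lamp) : Prop :=
  [/\ (`|lamp_n u| <= L.*2.+1)%N,
      (forall k, lamp_f u k <> 0 -> (`|k - lamp_n u| <= L.*2)%N) &
      (forall k, (`|lamp_f u k| <= L.*2.+1)%N)].

Lemma Tn_neq0 j : Tn L j <> 0%N -> (`|j| < L.*2)%N.
Proof. by rewrite /Tn; case: ifP; lia. Qed.

Lemma psi0_inbox u : psi0 (R:=R) L u <> 0 -> inbox u.
Proof.
rewrite /psi0; case: ifP => [/asboolP supp|_]; last by [].
move=> /eqP; rewrite mulf_eq0 negb_or => /andP[Tn0 /prodf_neq0 Hp].
have Tn0' : Tn L (lamp_n u) <> 0%N by move=> E; move: Tn0; rewrite /T E eqxx.
split; [exact: Tn_neq0|exact: supp|move=> k kw].
pose i : 'I_(nP L) := inord `|k - lamp_n u + (L.*2)%:Z|.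
have iv : (i : nat)%:Z = k - lamp_n u + (L.*2)%:Z by rewrite /i inordK /nP; lia.
have := Hp i isT; rewrite /T pnatr_eq0.
have -> : lamp_n u - (L.*2)%:Z + (i : nat)%:Z = k by lia.
by move=> /eqP /Tn_neq0.
Qed.

Lemma inbox_outbox u : inbox u -> outbox u.
Proof.
case=> H1 H2 H3; split => // [|k]; first lia.
case: (leqP `|k - lamp_n u| L.*2) => Hk; first by have := H3 _ Hk; lia.
case: (eqVneq (lamp_f u k) 0) => [->//|fk]; have := H2 k (elimN eqP fk); lia.
Qed.

Lemma inbox_tt s e w : (`|e| = 1)%N -> lamp_n s = e -> lamp_f s =1 (fun=> 0) ->
  inbox (lmul s w) -> outbox w.
Proof.
move=> e1 sn sf [/= H1 H2 H3]; rewrite sn in H1 H2 H3.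
split; first lia.
  move=> k fk; have := H2 (k + e); rewrite sf add0r addrK => /(_ fk); lia.
move=> k; case: (leqP `|k - lamp_n w| L.*2) => Hk.
  have := H3 (k + e); rewrite sf add0r addrK; lia.
have := H2 (k + e); rewrite sf add0r addrK.
case: (eqVneq (lamp_f w k) 0) => [->//|fk /(_ (elimN eqP fk))]; lia.
Qed.

Lemma inbox_aa s e w : (`|e| = 1)%N -> lamp_n s = 0 ->
  (forall k, lamp_f s k = if k == 0 then e else 0) ->
  inbox (lmul s w) -> outbox w.
Proof.
move=> e1 sn sf [/= H1 H2 H3]; rewrite sn add0r in H1 H2 H3.
split; first lia.
  move=> k fk; case: (eqVneq k 0) => [->|k0]; first lia.
  by apply: H2; rewrite sf subr0 (negbTE k0) add0r.
move=> k; case: (leqP `|k - lamp_n w| L.*2) => Hk.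
  have := H3 k Hk; rewrite sf subr0; case: ifP; lia.
have k0 : k != 0 by apply/eqP => k0; move: Hk; rewrite k0; lia.
have := H2 k; rewrite sf subr0 (negbTE k0) add0r.
case: (eqVneq (lamp_f w k) 0) => [->//|fk /(_ (elimN eqP fk))]; lia.
Qed.

End Boxes.

Section Enc.
Context (L : nat).

Lemma zv_inord (j : int) : (`|j| <= L.*2.+1)%N ->
  zv (inord (absz (j + (L.*2.+1)%:Z)) : 'I_(nV L)) = j.
Proof. by move=> jL; rewrite /zv inordK /nV; lia. Qed.

Lemma outbox_enc w : outbox L w -> exists b : Bx L, enc b = w.
Proof.
case=> H1 H2 H3.
exists (inord (absz (lamp_n w + (L.*2.+1)%:Z)),
        [ffun i : 'I_(nP L) => inord (absz (lamp_f w (lamp_n w - (L.*2)%:Z + i%:Z) + (L.*2.+1)%:Z))]).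
apply: lamp_ext => [k|] /=; last exact: zv_inord.
rewrite /encf zv_inord //.
case Hk: (_ && _).
  move: Hk => /andP[Hk1 Hk2]; rewrite /nP in Hk2.
  rewrite ffunE zv_inord // inordK; last by rewrite /nP; lia.
  by congr (lamp_f w _); lia.
case: (eqVneq (lamp_f w k) 0) => [->//|fk]; have := H2 k (elimN eqP fk).
move: Hk; rewrite /nP => /negbT; rewrite negb_and => /orP[]; lia.
Qed.

Lemma enc_inj : injective (@enc L).
Proof.
move=> [m1 h1] [m2 h2] E.
have En := congr1 lamp_n E; rewrite /= /zv in En.
have m12 : m1 = m2 by apply: val_inj => /=; lia.
subst m2; congr pair; apply/ffunP => i.
have := congr1 (fun w => lamp_f w (zv m1 - (L.*2)%:Z + i%:Z)) E.
rewrite /= /encf.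
have -> : zv m1 - (L.*2)%:Z + i%:Z - zv m1 + (L.*2)%:Z = i%:Z by lia.
have -> : (0 <= i%:Z) && (i%:Z < (nP L)%:Z) by have := ltn_ord i; lia.
rewrite absz_nat inord_val /zv => Ei; apply: val_inj => /=; lia.
Qed.

End Enc.

Definition stepgen (s : lamp) : Prop :=
  (exists e : int, [/\ `|e|%N = 1%N, lamp_n s = e & lamp_f s =1 (fun=> 0)]) \/
  (exists e : int, [/\ `|e|%N = 1%N, lamp_n s = 0 &
      forall k, lamp_f s k = if k == 0 then e else 0]).

Lemma lamp_gen_inv s : lamp_gen s -> stepgen (linv s).
Proof.
case=> [->|[->|[->|->]]]; rewrite ?linvK.
- right; exists (-1); split; [by []|by rewrite /= oppr0|].
  by move=> k /=; rewrite addr0; case: ifP; rewrite ?oppr0.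
- by left; exists (-1); split; [by []|by []|move=> k /=; rewrite oppr0].
- by right; exists 1; split.
- by left; exists 1; split.
Qed.

Section EsumPsi.
Context {R : realType} (L : nat) (p : R) (L0 : (0 < L)%N) (hp : 1 <= p).

Let p0 : 0 < p. Proof. exact: lt_le_trans hp. Qed.

Local Notation psi := (psi L p).

Lemma sum_step s : stepgen s ->
  \sum_(b : Bx L) `|psi (enc b) - psi (lmul s (enc b))| `^ p <= delta L `^ p.
Proof.
move=> sg; apply: le_trans (ratio_le L0 hp).
under eq_bigr => b _ do rewrite /psi -mulrBr normrM (ger0_norm (cN_ge0 _ _)) powRM
  ?cN_ge0 ?normr_ge0 // cN_p //.
rewrite -mulr_sumr.
have H : \sum_(b : Bx L) `|psi0 L (enc b) - psi0 L (lmul s (enc b))| `^ p <=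
         (nV L)%:R * V L p ^+ nP L.
  case: sg => [[e [e1 sn sf]]|[e [e1 sn sf]]]; [exact: (sum_t L hp e1 sn sf)|exact: (sum_a L0 hp e1 sn sf)].
apply: le_trans (_ : (Pt L p)^-1 * ((nV L)%:R * V L p ^+ nP L) <= _).
  by apply: ler_wpM2l => //; rewrite invr_ge0 ltW // Pt_gt0.
rewrite /Pt; have V0 := V_gt0 L0 hp.
have Vn : 0 < V L p ^+ nP L by apply: exprn_gt0.
set a := V L p ^+ nP L; set v := V L p.
have -> : (v * a)^-1 * ((nV L)%:R * a) = (nV L)%:R / v by field; rewrite !gt_eqF.
by [].
Qed.

Lemma esum_step s : stepgen s ->
  (\esum_(w in [set: lamp]) (`|psi w - psi (lmul s w)| `^ p)%:E <= (delta L `^ p)%:E)%E.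
Proof.
move=> sg.
rewrite (esum_range (@enc_inj L)); first by rewrite lee_fin; exact: sum_step.
  move=> w Fw; apply: outbox_enc.
  case: (eqVneq (psi0 (R:=R) L w) 0) => h1; last exact: inbox_outbox (psi0_inbox L0 (elimN eqP h1)).
  case: (eqVneq (psi0 (R:=R) L (lmul s w)) 0) => h2.
    by move: Fw; rewrite /psi h1 h2 mulr0 subr0 normr0 powR0 ?gt_eqF.
  have ib := psi0_inbox L0 (elimN eqP h2).
  case: sg => [[e [e1 sn sf]]|[e [e1 sn sf]]]; [exact: (inbox_tt L0 e1 sn sf ib)|exact: (inbox_aa L0 e1 sn sf ib)].
by move=> w; exact: powR_ge0.
Qed.

Lemma esum_psi1 :
  \esum_(w in [set: lamp]) (`|psi w| `^ p)%:E = 1%E.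
Proof.
rewrite (esum_range (@enc_inj L)).
- by under eq_bigr => b _ do rewrite ger0_norm ?psi_ge0 //; rewrite sum_psi.
- move=> w Fw; apply: outbox_enc; apply: (inbox_outbox L0); apply: (psi0_inbox (R:=R) L0).
  by move=> h; apply: Fw; rewrite /psi h mulr0 normr0 powR0 ?gt_eqF.
- by move=> w; exact: powR_ge0.
Qed.

End EsumPsi.

Section Tri.
Context {R : realType} (p : R) (hp : 1 <= p).

Let p0 : 0 < p. Proof. exact: lt_le_trans hp. Qed.

Lemma conv_pow (t x y : R) : 0 <= t -> t <= 1 -> 0 <= x -> 0 <= y ->
  (t * x + (1 - t) * y) `^ p <= t * x `^ p + (1 - t) * y `^ p.
Proof.
move=> t0 t1 x0 y0.
have := @convex_powR R p hp (Itv01 t0 t1) x y.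
rewrite !inE /= !in_itv /= !andbT => /(_ x0 y0).
by rewrite !convRE /=.
Qed.

Lemma wmink (A B a b : R) : 0 < a -> 0 < b ->
  `|A + B| `^ p <= (a / (a + b)) * ((a + b) `^ p / a `^ p) * `|A| `^ p +
                   (b / (a + b)) * ((a + b) `^ p / b `^ p) * `|B| `^ p.
Proof.
move=> a0 b0; have ab0 : 0 < a + b by exact: addr_gt0.
have t0 : 0 <= a / (a + b) by rewrite divr_ge0 // ltW.
have t1 : a / (a + b) <= 1 by rewrite ler_pdivrMr // mul1r lerDl ltW.
have e1 : 1 - a / (a + b) = b / (a + b) by field; rewrite gt_eqF.
apply: le_trans (_ : (`|A| + `|B|) `^ p <= _).
  apply: ge0_ler_powR; rewrite ?nnegrE ?addr_ge0 //; [exact: ltW|exact: ler_normD].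
have -> : `|A| + `|B| = a / (a + b) * (`|A| * ((a + b) / a)) +
                       (1 - a / (a + b)) * (`|B| * ((a + b) / b)).
  by rewrite e1; field; rewrite !gt_eqF.
apply: (le_trans (conv_pow t0 t1 _ _)); try by rewrite mulr_ge0 // divr_ge0 // ltW.
have a0' := ltW a0; have b0' := ltW b0; have ab0' := ltW ab0.
rewrite e1 !powRM ?invr_ge0 ?divr_ge0 // !(powR_inv hp) //.
by rewrite le_eqVlt; apply/orP; left; apply/eqP; ring.
Qed.

Lemma esum_tri (F G : lamp -> R) (a b : R) : 0 < a -> 0 < b ->
  (\esum_(z in [set: lamp]) (`|F z| `^ p)%:E <= (a `^ p)%:E)%E ->
  (\esum_(z in [set: lamp]) (`|G z| `^ p)%:E <= (b `^ p)%:E)%E ->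
  (\esum_(z in [set: lamp]) (`|F z + G z| `^ p)%:E <= ((a + b) `^ p)%:E)%E.
Proof.
move=> a0 b0 HF HG.
set c1 := a / (a + b) * ((a + b) `^ p / a `^ p).
set c2 := b / (a + b) * ((a + b) `^ p / b `^ p).
have ab0 : 0 < a + b by exact: addr_gt0.
have c10 : 0 <= c1 by rewrite /c1 !mulr_ge0 ?invr_ge0 ?powR_ge0 ?ltW.
have c20 : 0 <= c2 by rewrite /c2 !mulr_ge0 ?invr_ge0 ?powR_ge0 ?ltW.
apply: (@le_trans _ _ (\esum_(z in [set: lamp])
   (c1%:E * (`|F z| `^ p)%:E + c2%:E * (`|G z| `^ p)%:E))%E).
  by apply: le_esum => z _; rewrite -!EFinM -EFinD lee_fin; exact: wmink.
rewrite esumD; last 2 first.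
- by move=> z _; rewrite -EFinM lee_fin mulr_ge0 ?powR_ge0.
- by move=> z _; rewrite -EFinM lee_fin mulr_ge0 ?powR_ge0.
rewrite !esumZ //; try by move=> z _; rewrite lee_fin powR_ge0.
apply: (@le_trans _ _ (c1%:E * (a `^ p)%:E + c2%:E * (b `^ p)%:E)%E).
  by apply: leeD; apply: lee_wpmul2l.
rewrite -!EFinM -EFinD lee_fin /c1 /c2.
have ap : 0 < a `^ p by exact: powR_gt0.
have bp : 0 < b `^ p by exact: powR_gt0.
by rewrite le_eqVlt; apply/orP; left; apply/eqP; field; rewrite !gt_eqF.
Qed.

End Tri.

Lemma linv_mul u s : linv (lmul u s) = lmul (linv s) (linv u).
Proof.
apply: lamp_ext => [k|] /=; last by rewrite opprD addrC.
rewrite opprD addrC.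
have -> : k + (lamp_n u + lamp_n s) - lamp_n u = k + lamp_n s by lia.
have -> : k - - lamp_n s + lamp_n u = k + (lamp_n u + lamp_n s) by lia.
by [].
Qed.

Lemma In_rcons (T : Type) (a b : T) l : List.In a (rcons l b) -> List.In a l \/ a = b.
Proof.
rewrite -cats1 => /List.in_app_iff [|/= [<-|//]]; tauto.
Qed.

Section Main.
Context {R : realType} (L : nat) (p : R) (L0 : (0 < L)%N) (hp : 1 <= p).

Let p0 : 0 < p. Proof. exact: lt_le_trans hp. Qed.

Definition xi (x z : lamp) : R := psi L p (lmul (linv x) z).

Lemma delta_gt0 : 0 < delta (R:=R) L.
Proof. by rewrite /delta divr_gt0 // ltr0n. Qed.

Lemma xi_step y s : lamp_gen s ->
  (\esum_(z in [set: lamp]) (`|xi y z - xi (lmul y s) z| `^ p)%:E <= (delta L `^ p)%:E)%E.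
Proof.
move=> gs; rewrite (esum_shift y).
under eq_esum => w _ do rewrite /xi lmulKV linv_mul -lmulA lmulKV.
exact: (esum_step L0 hp (lamp_gen_inv gs)).
Qed.

Lemma chain x w : (forall s, List.In s w -> lamp_gen s) ->
  (\esum_(z in [set: lamp]) (`|xi x z - xi (foldl lmul x w) z| `^ p)%:E
     <= (((size w)%:R * delta L) `^ p)%:E)%E.
Proof.
elim/last_ind: w => [|w s IH] gw.
  rewrite /= mul0r powR0 ?gt_eqF //.
  by rewrite esum1 // => z _; rewrite subrr normr0 powR0 ?gt_eqF.
have gw' : forall s', List.In s' w -> lamp_gen s'.
  by move=> s' Hs; apply: gw; rewrite -cats1; apply/List.in_app_iff; left.
have gs : lamp_gen s by apply: gw; rewrite -cats1; apply/List.in_app_iff; right; left.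
rewrite foldl_rcons size_rcons.
set y := foldl lmul x w.
have [w0|wn0] := eqVneq (size w) 0%N.
  have -> : y = x by rewrite /y; move/size0nil: w0 => ->.
  by rewrite w0 mul1r; exact: xi_step.
have := esum_tri hp (F := fun z => xi x z - xi y z) (G := fun z => xi y z - xi (lmul y s) z)
  (a := (size w)%:R * delta L) (b := delta L).
rewrite mulr_gt0 ?ltr0n ?lt0n ?delta_gt0 // => /(_ isT isT (IH gw') (xi_step y gs)) H.
have E : forall z, xi x z - xi y z + (xi y z - xi (lmul y s) z) = xi x z - xi (lmul y s) z.
  by move=> z; ring.
under eq_esum => z _ do rewrite -E.
by rewrite -natr1 mulrDl mul1r.
Qed.

End Main.

Section Main2.
Context {R : realType} (L : nat) (p : R) (L0 : (0 < L)%N) (hp : 1 <= p).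

Let p0 : 0 < p. Proof. exact: lt_le_trans hp. Qed.

Local Notation xi := (xi L p).

Lemma lp_le (u : lamp -> R) (c : R) : 0 <= c ->
  (\esum_(z in [set: lamp]) (`|u z| `^ p)%:E <= (c `^ p)%:E)%E ->
  (lp_norm p u <= c%:E)%E.
Proof.
move=> c0; rewrite /lp_norm.
have : (0 <= \esum_(z in [set: lamp]) (`|u z| `^ p)%:E)%E.
  by apply: esum_ge0 => z _; rewrite lee_fin powR_ge0.
case: (\esum_(z in _) _)%E => [e| |] //= e0 he.
move: e0 he; rewrite !lee_fin => e0 he.
have -> : c = (c `^ p) `^ p^-1 by rewrite -powRrM mulfV ?gt_eqF // powRr1.
apply: ge0_ler_powR => //; last by rewrite nnegrE powR_ge0.
by rewrite invr_ge0 ltW.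
Qed.

Lemma word_exists x y : exists w : seq lamp,
  (forall s, List.In s w -> lamp_gen s) /\ foldl lmul x w = y.
Proof.
have [N HN] := lamp_fin (lmul (linv x) y).
exists (fullw N (lmul (linv x) y)); split; first exact: gen_fullw.
by rewrite foldl_lmul fullw_spec // lmulK.
Qed.

Lemma lip_bound x y :
  (lp_norm p (fun z => (xi x z - xi y z)%R) * ((@lamp_dist R x y)^-1)%:E <= (delta L)%:E)%E.
Proof.
have dpos := delta_gt0 (R:=R) L0.
have Hw : forall w, (forall s, List.In s w -> lamp_gen s) -> foldl lmul x w = y ->
    (lp_norm p (fun z => (xi x z - xi y z)%R) <= ((size w)%:R * delta L)%:E)%E.
  move=> w gw <-; apply: lp_le; first by rewrite mulr_ge0 ?ler0n // ltW.
  exact: chain.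
have [w0 [g0 e0]] := word_exists x y.
have ge0 : (0 <= lp_norm p (fun z => (xi x z - xi y z)%R))%E by exact: poweR_ge0.
have fin : lp_norm p (fun z => (xi x z - xi y z)%R) \is a fin_num.
  by rewrite ge0_fin_numE // (le_lt_trans (Hw w0 g0 e0)) // ltry.
set N := lp_norm _ _ in Hw ge0 fin *.
rewrite -(fineK fin) -EFinM lee_fin.
set n := fine N; have n0 : 0 <= n by rewrite /n fine_ge0.
have Hn : n / delta L <= @lamp_dist R x y.
  apply: lb_le_inf; first by exists (size w0)%:R; exists w0.
  move=> _ [w [gw ew] <-]; rewrite ler_pdivrMr //.
  by rewrite -lee_fin /n fineK // Hw.
set D := lamp_dist x y in Hn *.
have [D0|Dn0] := eqVneq D 0; first by rewrite D0 invr0 mulr0 ltW.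
have Dp : 0 < D by rewrite lt_neqAle eq_sym Dn0 (le_trans _ Hn) // divr_ge0 // ltW.
by rewrite ler_pdivrMr // mulrC -ler_pdivrMr.
Qed.

Lemma lip_xi : (lip_const (@lamp_dist R) p xi <= (delta L)%:E)%E.
Proof. by apply: ge_ereal_sup => _ [x [y [_ ->]]]; exact: lip_bound. Qed.

Lemma in_lp1_xi x : in_lp1 p (xi x).
Proof.
have E : (\esum_(y in [set: lamp]) (`|xi x y| `^ p)%:E)%E = 1%E.
  by rewrite (esum_shift x); under eq_esum => w _ do rewrite /xi lmulKV; exact: esum_psi1.
split; first by rewrite /in_lp E ltry.
by rewrite /lp_norm E poweR1r.
Qed.

Definition Sz : nat := (4 * L + (4 * L).*2.+1 * (L.*2).+1 + (4 * L).*2.+1)%N.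

Lemma supp_xi : (supp_radius (@lamp_dist R) xi <= (Sz%:R)%:E)%E.
Proof.
apply: ge_ereal_sup => _ [x [y [nz ->]]]; rewrite lee_fin.
set u := lmul (linv x) y.
have ib : inbox L u.
  apply: (psi0_inbox (R:=R) L0) => h; apply: nz.
  by rewrite /xi /psi -/u h mulr0.
case: ib => [H1 H2 H3].
have supp : forall k, (4 * L < `|k|)%N -> lamp_f u k = 0.
  move=> k Hk; case: (eqVneq (lamp_f u k) 0) => [//|fk].
  by have := H2 k (elimN eqP fk); lia.
have fB : forall k, (`|lamp_f u k| <= L.*2)%N.
  move=> k; case: (leqP `|k - lamp_n u| L.*2) => Hk; first by have := H3 k Hk; lia.
  case: (eqVneq (lamp_f u k) 0) => [->//|fk].
  by have := H2 k (elimN eqP fk); lia.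
have nB : (`|lamp_n u| <= 4 * L)%N by lia.
apply: le_trans (dist_le_word (w := fullw (4 * L) u) _ _) _.
- exact: gen_fullw.
- by rewrite foldl_lmul fullw_spec // /u lmulK.
- by rewrite ler_nat; exact: size_fullw.
Qed.

Lemma profile_le (S : R) : Sz%:R <= S ->
  (lp_profile (@lamp_dist R) p S <= (delta L)%:E)%E.
Proof.
move=> SS; apply: le_trans (lip_xi); apply: ereal_inf_lbound.
exists xi => //; split; first exact: in_lp1_xi.
by apply: le_trans supp_xi _; rewrite lee_fin.
Qed.

End Main2.

Theorem corollary4p2p7 (R : realType) (p : R) (hp : 1 <= p) :
  exists C D : R, 0 < C /\ 0 < D /\
    exists t0 : R, forall t : R, t0 <= t ->
      (C%:E * lp_profile (@lamp_dist R) p (D * t) <= (ln t / t `^ (3^-1))%:E)%E.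
Proof.
exists (6^-1), 40; split; first by rewrite invr_gt0.
split => //; exists (expR 1) => t Ht.
have e2 : 2 <= expR 1 :> R by have := expR_ge1Dx (1:R); lra.
have t1 : 1 <= t by lra.
have t0 : 0 < t by lra.
have lnt : 1 <= ln t.
  rewrite -[X in X <= _](expRK 1) ler_ln // posrE; lra.
set c := t `^ 3^-1.
have c1 : 1 <= c.
  by have := @ler_powR R t t1 0 3^-1; rewrite powRr0; apply; rewrite invr_ge0.
have c3 : c ^+ 3 = t.
  by rewrite /c -powR_mulrn ?powR_ge0 // -powRrM mulVf ?powRr1 // ?ltW // pnatr_eq0.
set L := Num.truncn c.
have cL := truncn_itv (ltW (lt_le_trans ltr01 c1)).
rewrite -/L in cL; case/andP: cL => Lc cL.
have L0 : (0 < L)%N by rewrite /L truncn_gt0.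
have SzL : (Sz L)%:R <= 40 * t.
  apply: (@le_trans _ _ ((40 * L ^ 3)%N)%:R).
    by rewrite ler_nat /Sz; nia.
  rewrite natrM natrX -c3; apply: ler_wpM2l => //.
  by apply: lerXn2r; rewrite ?nnegrE ?ler0n // (le_trans ler01 c1).
apply: le_trans (_ : (6^-1)%:E * (delta L)%:E <= _)%E.
  by apply: lee_wpmul2l; [rewrite lee_fin invr_ge0|exact: profile_le].
rewrite -EFinM lee_fin /delta.
have Lp : 0 < L%:R :> R by rewrite ltr0n.
have c0 : 0 < c by lra.
have c2L : c <= 2 * L%:R.
  have : (1 <= L)%N by [].
  rewrite -(ler_nat R) => L1; move: cL; rewrite -natr1; lra.
apply: (@le_trans _ _ (1 / c)).
  have -> : 6^-1 * (3 / L%:R) = (2 * L%:R)^-1 :> R by field; rewrite gt_eqF.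
  by rewrite div1r lef_pV2 ?posrE // mulr_gt0.
by rewrite ler_pM2r ?invr_gt0.
Qed.
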